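(* Let \(R\) be a nuclear bornological \(V\)-algebra. Then the linear growth bornological algebra \(\mathrm{ling}(R)\) and its completion \(R^{\dagger}=\overline{\mathrm{ling}(R)}\) are nuclear.
   Context: Let \(V\) be a complete discrete valuation ring with uniformiser \(\pi\). A bornology on a set is a collection of subsets (called bounded) containing all finite subsets and closed under finite unions and under taking subsets. A bornological \(V\)-module is a \(V\)-module with a bornology such that every bounded subset is contained in a bounded \(V\)-submodule; it is complete if every bounded subset is contained in a bounded \(\pi\)-adically complete \(V\)-submodule. The completion \(\overline M\) of \(M\) is the complete bornological \(V\)-module with a bounded map \(M\to\overline M\) through which every bounded map from \(M\) to a complete module factors uniquely. A bornological \(V\)-algebra is a \(V\)-algebra with such a bornology and bounded multiplication. The linear growth bornology on \(R\) is the bornology generated by the \(V\)-submodules \(\sum_{i\ge0}\pi^iS^{i+1}\) for \(S\subseteq R\) bounded in the original bornology; \(\mathrm{ling}(R)\) denotes \(R\) with this bornology. A subset \(S\) of a bornological \(V\)-module \(M\) is compactoid if there is a bounded \(V\)-submodule \(T\subseteq M\) with \(S\subseteq T\) such that for every \(n\) there is a finite \(F_n\subseteq T\) with \(S\subseteq VF_n+\pi^nT\); \(M\) is nuclear if every bounded subset is compactoid. *)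

(* Defs.v *)
From HB Require Import structures.
From mathcomp Require Import all_boot all_order all_algebra.
From mathcomp Require Import boolp classical_sets functions cardinality.
Set Implicit Arguments. Unset Strict Implicit. Unset Printing Implicit Defensive.
Import GRing.Theory.
Local Open Scope ring_scope.
Local Open Scope classical_set_scope.

Section Defs.
Variables (V : idomainType).

Definition is_dvr_unif (pi : V) : Prop :=
  [/\ pi != 0, pi \isn't a GRing.unit &
      forall x : V, x != 0 -> exists u : V, exists n : nat,
        u \is a GRing.unit /\ x = u * pi ^+ n].

Definition pi_complete_ring (pi : V) : Prop :=
  (forall x : V, (forall n : nat, exists y, x = pi ^+ n * y) -> x = 0) /\
  (forall a : nat -> V,
     (forall n, exists y, a n.+1 - a n = pi ^+ n * y) ->
     exists l : V, forall n, exists y, l - a n = pi ^+ n * y).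

Definition is_complete_dvr (pi : V) : Prop :=
  is_dvr_unif pi /\ pi_complete_ring pi.

Section Mod.
Variable M : lmodType V.

Definition submodule (T : set M) : Prop :=
  [/\ T 0, (forall x y, T x -> T y -> T (x + y)) &
      (forall (a : V) x, T x -> T (a *: x))].

Definition pimul (pi : V) (n : nat) (T : set M) : set M :=
  [set pi ^+ n *: t | t in T].

Definition span (A : set M) : set M :=
  [set x | exists s : seq (V * M),
      (forall p, p \in s -> A p.2) /\ x = \sum_(p <- s) p.1 *: p.2].

Definition pi_complete_sub (pi : V) (T : set M) : Prop :=
  [/\ submodule T,
      (forall x, T x -> (forall n, pimul pi n T x) -> x = 0) &
      (forall a : nat -> M, (forall n, T (a n)) ->
         (forall n, pimul pi n T (a n.+1 - a n)) ->
         exists2 l, T l & forall n, pimul pi n T (l - a n))].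

Definition is_bornology (B : set (set M)) : Prop :=
  [/\ (forall F : set M, finite_set F -> B F),
      (forall S1 S2, B S1 -> B S2 -> B (S1 `|` S2)) &
      (forall S1 S2, S1 `<=` S2 -> B S2 -> B S1)].

Definition born_mod (B : set (set M)) : Prop :=
  is_bornology B /\
  forall S, B S -> exists T, [/\ submodule T, B T & S `<=` T].

Definition complete_born_mod (pi : V) (B : set (set M)) : Prop :=
  is_bornology B /\
  forall S, B S -> exists T, [/\ pi_complete_sub pi T, B T & S `<=` T].

Definition compactoid (pi : V) (B : set (set M)) (S : set M) : Prop :=
  exists T : set M, [/\ submodule T, B T, S `<=` T &
    forall n : nat, exists F : set M, [/\ finite_set F, F `<=` T &
      S `<=` [set x + y | x in span F & y in pimul pi n T]]].

Definition nuclear (pi : V) (B : set (set M)) : Prop :=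
  forall S, B S -> compactoid pi B S.

Definition is_Valgebra (mul : M -> M -> M) : Prop :=
  [/\ associative mul,
      (forall (a : V) x y z, mul (a *: x + y) z = a *: mul x z + mul y z) &
      (forall (a : V) x y z, mul x (a *: y + z) = a *: mul x y + mul x z)].

Definition born_alg (mul : M -> M -> M) (B : set (set M)) : Prop :=
  born_mod B /\
  forall S1 S2, B S1 -> B S2 -> B [set mul x y | x in S1 & y in S2].

Definition nprod (mul : M -> M -> M) (x0 : M) (xs : seq M) : M :=
  foldl mul x0 xs.

(* the V-submodule  sum_{i >= 0} pi^i S^{i+1} *)
Definition ling_gen (mul : M -> M -> M) (pi : V) (S : set M) : set M :=
  span [set pi ^+ (size xs) *: nprod mul x0 xs | x0 in S & xs in
          [set xs : seq M | forall x, x \in xs -> S x]].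

Definition ling (mul : M -> M -> M) (pi : V) (B : set (set M)) : set (set M) :=
  [set T | forall B' : set (set M), is_bornology B' ->
     (forall S, B S -> B' (ling_gen mul pi S)) -> B' T].

End Mod.

Definition is_linear (M N : lmodType V) (f : M -> N) : Prop :=
  forall (a : V) x y, f (a *: x + y) = a *: f x + f y.

Definition bounded_map (M N : lmodType V) (BM : set (set M)) (BN : set (set N))
  (f : M -> N) : Prop :=
  forall S, BM S -> BN (f @` S).

Definition is_completion (pi : V) (M : lmodType V) (BM : set (set M))
  (C : lmodType V) (BC : set (set C)) (j : M -> C) : Prop :=
  [/\ complete_born_mod pi BC, is_linear j, bounded_map BM BC j &
      forall (N : lmodType V) (BN : set (set N)) (f : M -> N),
        complete_born_mod pi BN -> is_linear f -> bounded_map BM BN f ->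
        exists g : C -> N, [/\ is_linear g, bounded_map BC BN g,
          (forall x, g (j x) = f x) &
          forall g' : C -> N, is_linear g' -> bounded_map BC BN g' ->
            (forall x, g' (j x) = f x) -> forall c, g' c = g c]].

End Defs.

(* Main.v *)
Require Import Defs.
From HB Require Import structures.
From mathcomp Require Import all_boot all_order all_algebra.
From mathcomp Require Import boolp classical_sets functions cardinality.
From mathcomp Require Import zify.
Set Implicit Arguments. Unset Strict Implicit. Unset Printing Implicit Defensive.
Import GRing.Theory.

Section Gen.
Local Open Scope ring_scope.
Local Open Scope classical_set_scope.
Variables (V : idomainType) (pi : V).

Definition linf (M N : lmodType V) (f : M -> N) :=
  forall (a : V) x y, f (a *: x + y) = a *: f x + f y.

Lemma linf0 (M N : lmodType V) (f : M -> N) : linf f -> f 0 = 0.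
Proof.
move=> fl; have := fl 1 0 0; rewrite scaler0 addr0 scale1r => h.
have : f 0 - f 0 = f 0 + f 0 - f 0 by rewrite -h.
by rewrite subrr addrK.
Qed.

Lemma linfD (M N : lmodType V) (f : M -> N) : linf f -> forall x y, f (x + y) = f x + f y.
Proof. by move=> fl x y; have := fl 1 x y; rewrite !scale1r. Qed.

Lemma linfZ (M N : lmodType V) (f : M -> N) : linf f -> forall a x, f (a *: x) = a *: f x.
Proof. by move=> fl a x; rewrite -[a *: x]addr0 fl linf0 // addr0. Qed.

Lemma linf_scale (M N : lmodType V) (f : M -> N) c : linf f -> linf (fun x => c *: f x).
Proof. by move=> fl a x y; rewrite fl scalerDr !scalerA mulrC. Qed.

Section M.
Variable M : lmodType V.

Lemma span_sub (A : set M) : A `<=` Defs.span A.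
Proof.
move=> x Ax; exists [:: (1, x)]; split; last by rewrite big_seq1 scale1r.
by move=> p; rewrite inE => /eqP ->.
Qed.

Lemma span_mono (A B : set M) : A `<=` B -> Defs.span A `<=` Defs.span B.
Proof. by move=> AB x [s [sA ->]]; exists s; split => // p /sA /AB. Qed.

Lemma span_submodule (A : set M) : submodule (Defs.span A).
Proof.
split.
- by exists [::]; split => //; rewrite big_nil.
- move=> x y [s [sA ->]] [t [tA ->]]; exists (s ++ t); split; last by rewrite big_cat.
  by move=> p; rewrite mem_cat => /orP [/sA|/tA].
- move=> a x [s [sA ->]]; exists (map (fun p => (a * p.1, p.2)) s); split.
    by move=> p /mapP [q /sA qs ->].
  by rewrite big_map scaler_sumr; apply: eq_bigr => p _; rewrite scalerA.
Qed.

Lemma span_lin (N : lmodType V) (f : M -> N) (A : set M) (U : set N) :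
  submodule U -> linf f -> (forall x, A x -> U (f x)) ->
  forall x, Defs.span A x -> U (f x).
Proof.
move=> [U0 UD UZ] fl fA x [s [sA ->]].
elim: s sA => [|p s IH] sA; first by rewrite big_nil linf0.
rewrite big_cons fl; apply: UD; first by apply: UZ; apply: fA; apply: sA; exact: mem_head.
by apply: IH => q qs; apply: sA; rewrite inE qs orbT.
Qed.

Lemma span_min (A U : set M) : submodule U -> A `<=` U -> Defs.span A `<=` U.
Proof. by move=> sU AU x; apply: (span_lin (f := id)) => // a y z. Qed.

Lemma sub_sum (X Y : set M) : submodule X -> submodule Y ->
  submodule [set x + y | x in X & y in Y].
Proof.
move=> [X0 XD XZ] [Y0 YD YZ]; split.
- by exists 0 => //; exists 0 => //; rewrite addr0.
- move=> _ _ [x1 h1 [y1 k1 <-]] [x2 h2 [y2 k2 <-]].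
  exists (x1 + x2); first exact: XD.
  exists (y1 + y2); first exact: YD.
  by rewrite addrACA.
- move=> a _ [x h [y k <-]]; exists (a *: x); first exact: XZ.
  by exists (a *: y); [exact: YZ | rewrite scalerDr].
Qed.

Lemma pimul_sub n (T : set M) : submodule T -> submodule (pimul pi n T).
Proof.
move=> [T0 TD TZ]; split.
- by exists 0 => //; rewrite scaler0.
- move=> _ _ [x h <-] [y k <-]; exists (x + y); [exact: TD | by rewrite scalerDr].
- move=> a _ [x h <-]; exists (a *: x); [exact: TZ | by rewrite !scalerA mulrC].
Qed.

Lemma pimul_le n (T : set M) : submodule T -> pimul pi n T `<=` T.
Proof. by move=> [_ _ TZ] _ [x h <-]; exact: TZ. Qed.

Lemma pimul_mono n (T T' : set M) : T `<=` T' -> pimul pi n T `<=` pimul pi n T'.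
Proof. by move=> TT; apply: image_subset. Qed.

Lemma compactoid_sub (B : set (set M)) S S' : S' `<=` S -> compactoid pi B S -> compactoid pi B S'.
Proof.
move=> SS [T [sT BT ST h]]; exists T; split => //; first exact: subset_trans ST.
by move=> n; have [F [fF FT c]] := h n; exists F; split => //; exact: subset_trans c.
Qed.


Lemma sum_big (T : set M) (F : nat -> M) m : submodule T -> (forall i, T (F i)) ->
  T (\sum_(i < m) F i).
Proof.
move=> [T0 TD TZ] h; elim: m => [|m IH]; first by rewrite big_ord0.
by rewrite big_ord_recr /=; apply: TD.
Qed.

Lemma submB (T : set M) x y : submodule T -> T x -> T y -> T (x - y).
Proof. by move=> [_ D Z] hx hy; apply: D => //; rewrite -scaleN1r; apply: Z. Qed.

Lemma zmod_id (x L Ak Am : M) : x - (L - Ak) = (x - (Am - Ak)) - (L - Am).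
Proof.
by rewrite !opprB !addrA addrNK addrAC.
Qed.

Lemma closed_complete (T0 T' : set M) : pi_complete_sub pi T0 -> submodule T' ->
  T' `<=` T0 ->
  (forall x, T0 x -> (forall n, exists2 y, T' y & pimul pi n T0 (x - y)) -> T' x) ->
  pi_complete_sub pi T'.
Proof.
move=> [sT0 sep0 com0] sT' T'T0 cl; split => //.
  by move=> x /T'T0 x0 h; apply: sep0 => // n; by have := h n; apply: pimul_mono.
move=> a aT d.
have /choice [t ht] : forall n, exists t, T' t /\ pi ^+ n *: t = a n.+1 - a n.
  by move=> n; have [t tT <-] := d n; exists t.
have [l l0 hl] := com0 a (fun n => T'T0 _ (aT n)) (fun n => pimul_mono T'T0 (d n)).
have lT : T' l.
  by apply: cl => // n; exists (a n) => //.
exists l => // k.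
pose b m := \sum_(i < m) pi ^+ i *: t (k + i)%N.
have bT m : T' (b m).
  apply: (sum_big (F := fun i => pi ^+ i *: t (k + i)%N)) => // i; case: sT' => _ _ Z; apply: Z; exact: (ht _).1.
have bd m : pimul pi m T' (b m.+1 - b m).
  by exists (t (k + m)%N); [exact: (ht _).1 | rewrite /b big_ord_recr /= addrC addrK].
have [z z0 hz] := com0 b (fun m => T'T0 _ (bT m)) (fun m => pimul_mono T'T0 (bd m)).
have zT : T' z by apply: cl => // n; exists (b n).
have pb m : pi ^+ k *: b m = a (k + m)%N - a k.
  elim: m => [|m IH]; first by rewrite /b big_ord0 scaler0 addn0 subrr.
  rewrite /b big_ord_recr /= scalerDr -/(b m) IH scalerA -exprD (ht _).2 addnS.
  by rewrite addrC addrA subrK.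
exists z => //.
apply/eqP; rewrite -subr_eq0; apply/eqP; apply: sep0.
  apply: submB => //; last apply: submB => //; last exact: T'T0.
  by case: sT0 => _ _ Z; apply: Z.
move=> m.
have [w w0 hw] := hz m.
have [u u0 hu] := hl (k + m)%N.
exists (pi ^+ k *: (w - u)).
  by case: (sT0) => _ _ Z; apply: Z; apply: submB.
rewrite (zmod_id _ _ _ (a (k + m)%N)) -pb -scalerBr -hw -hu.
by rewrite !scalerBr !scalerA -!exprD addnC.
Qed.


Lemma compactoid_complete (BC : set (set M)) S : complete_born_mod pi BC ->
  compactoid pi BC S ->
  exists T', [/\ pi_complete_sub pi T', compactoid pi BC T' & S `<=` T'].
Proof.
move=> [bC cC] [T [sT BT ST h]].
have /choice [Fs hF] := h.
have [T0 [cT0 BT0 TT0]] := cC T BT.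
have sT0 : submodule T0 by case: cT0.
pose T' := [set x | T0 x /\ forall n,
  [set x + y | x in Defs.span (Fs n) & y in pimul pi n T0] x].
have sT' : submodule T'.
  split.
  - split; first by case: sT0.
    move=> n; case: (sub_sum (span_submodule (Fs n)) (pimul_sub n sT0)) => + _ _; exact.
  - move=> x y [x0 hx] [y0 hy]; split; first by case: sT0 => _ D _; apply: D.
    move=> n; case: (sub_sum (span_submodule (Fs n)) (pimul_sub n sT0)) => _ D _.
    exact: D.
  - move=> a x [x0 hx]; split; first by case: sT0 => _ _ Z; apply: Z.
    move=> n; case: (sub_sum (span_submodule (Fs n)) (pimul_sub n sT0)) => _ _ Z.
    exact: Z.
exists T'; split.
- apply: (closed_complete cT0 sT') => [x []//|x x0 hx]; split => // n.
  have [y [y0 yn] d] := hx n.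
  have [u hu [v hv yE]] := yn n; rewrite -yE in d.
  exists u => //; exists (v + (x - (u + v))); last by rewrite addrA addrC subrK.
  by case: (pimul_sub n sT0) => _ D _; apply: D.
- exists T0; split => // [x []//|n].
  have [fF FT _] := hF n.
  by exists (Fs n); split => // [x /FT /TT0 //|x [_ ]]; apply.
- move=> x Sx; split; first exact/TT0/ST.
  move=> n; have [_ _ c] := hF n.
  have [u hu [v hv <-]] := c x Sx.
  by exists u => //; exists v => //; apply: pimul_mono TT0 _ hv.
Qed.

Lemma nucl_complete (BC : set (set M)) : complete_born_mod pi BC ->
  complete_born_mod pi (compactoid pi BC).
Proof.
move=> [[bF bU bS] cC]; split; last first.
  by move=> S /(compactoid_complete (conj (And3 bF bU bS) cC)) [T' [h1 h2 h3]]; exists T'.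
split.
- move=> F fF; have [T0 [[sT0 _ _] BT0 FT0]] := cC F (bF F fF).
  exists T0; split => // n; exists F; split => // x Fx.
  exists x; first exact: span_sub.
  by exists 0; [exists 0; [case: sT0 | rewrite scaler0] | rewrite addr0].
- move=> S1 S2 [T1 [sT1 BT1 ST1 h1]] [T2 [sT2 BT2 ST2 h2]].
  have [T [[sT _ _] BT TT]] := cC _ (bU _ _ BT1 BT2).
  exists T; split => //.
    by move=> x [/ST1 ?|/ST2 ?]; apply: TT; [left|right].
  move=> n; have [F1 [f1 F1T c1]] := h1 n; have [F2 [f2 F2T c2]] := h2 n.
  exists (F1 `|` F2); split.
  + by rewrite finite_setU.
  + by move=> x [/F1T ?|/F2T ?]; apply: TT; [left|right].
  + move=> x [/c1|/c2] [u hu [v [t ht <-] <-]]; exists u.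
    * by apply: span_mono hu => y ?; left.
    * by exists (pi ^+ n *: t) => //; exists t => //; apply: TT; left.
    * by apply: span_mono hu => y ?; right.
    * by exists (pi ^+ n *: t) => //; exists t => //; apply: TT; right.
- move=> S1 S2 S12; exact: compactoid_sub.
Qed.

End M.

Lemma compactoid_image (M N : lmodType V) (BM : set (set M)) (BN : set (set N))
  (f : M -> N) S : linf f -> bounded_map BM BN f -> compactoid pi BM S ->
  compactoid pi BN (f @` S).
Proof.
move=> fl fb [T [[T0 TD TZ] BT ST h]].
exists (f @` T); split.
- split.
  + by exists 0 => //; rewrite linf0.
  + by move=> _ _ [x hx <-] [y hy <-]; exists (x + y); [apply: TD | rewrite linfD].
  + by move=> a _ [x hx <-]; exists (a *: x); [apply: TZ | rewrite linfZ].
- exact: fb.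
- by apply: image_subset.
move=> n; have [F [fF FT c]] := h n.
exists (f @` F); split.
- exact: finite_image.
- by apply: image_subset.
move=> _ [x /c [u hu [_ [t ht <-] <-]] <-].
exists (f u).
  apply: (span_lin (span_submodule _) fl) hu => y Fy.
  by apply: span_sub; exists y.
exists (pi ^+ n *: f t); first by exists (f t) => //; exists t.
by rewrite (linfD fl) (linfZ fl).
Qed.

Lemma part2 (M : lmodType V) (BM : set (set M)) (C : lmodType V) (BC : set (set C))
  (j : M -> C) : nuclear pi BM -> is_completion pi BM BC j -> nuclear pi BC.
Proof.
move=> nM [cBC jl jb univ].
have cBN := nucl_complete cBC.
have jb' : bounded_map BM (compactoid pi BC) j.
  by move=> S /nM; apply: compactoid_image.
have [g [gl gb gj gu]] := univ C _ j cBN jl jb'.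
have [g2 [g2l g2b g2j g2u]] := univ C _ j cBC jl jb.
have BNBC : forall S, compactoid pi BC S -> BC S.
  case: cBC => [[_ _ bS] _] S [T [_ BT ST _]]; exact: bS BT.
have idg c : g c = c.
  transitivity (g2 c).
    apply: g2u => //; move=> S hS; exact: BNBC (gb S hS).
  symmetry; apply: (g2u id) => //.
  by move=> S BS; rewrite image_id.
move=> S /gb; suff -> : g @` S = S by [].
by rewrite (_ : g = id) ?image_id //; apply: funext.
Qed.

End Gen.
Section Alg.
Local Open Scope ring_scope.
Local Open Scope classical_set_scope.
Variables (V : idomainType) (pi : V) (R : lmodType V) (mul : R -> R -> R).
Hypothesis Valg : is_Valgebra mul.

Lemma mull_lin z : linf (fun x => mul x z).
Proof. by case: Valg => _ h _ a x y; apply: h. Qed.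
Lemma mulr_lin x : linf (fun z => mul x z).
Proof. by case: Valg => _ _ h a y z; apply: h. Qed.

Notation LG := (ling_gen mul pi).

Lemma lg_sub W : W `<=` LG W.
Proof.
move=> x Wx; apply: span_sub; exists x => //; exists [::] => //.
by rewrite expr0 scale1r.
Qed.

Lemma lg_mono W W' : W `<=` W' -> LG W `<=` LG W'.
Proof.
move=> WW; apply: span_mono => _ [x0 h0 [xs hxs <-]].
by exists x0; [exact: WW | exists xs => // x /hxs /WW].
Qed.

Lemma lg_mulr W u w : LG W u -> W w -> LG W (pi *: mul u w).
Proof.
move=> hu Ww.
apply: (span_lin (f := fun u => pi *: mul u w) (span_submodule _) _ _ hu).
  exact: linf_scale (mull_lin w).
move=> _ [x0 h0 [xs hxs <-]].
apply: span_sub; exists x0 => //; exists (rcons xs w).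
  by move=> x; rewrite mem_rcons inE => /orP [/eqP ->|/hxs].
rewrite (linfZ (mull_lin w)) scalerA -exprS size_rcons /nprod foldl_rcons //.
Qed.

Lemma span_mul2 (A Bs : set R) c g x : Defs.span A g -> Defs.span Bs x ->
  Defs.span [set c *: mul a b | a in A & b in Bs] (c *: mul g x).
Proof.
move=> hg hx.
have h1 b : Bs b -> Defs.span [set c *: mul a b | a in A & b in Bs] (c *: mul g b).
  move=> Bb; apply: (span_lin (f := fun g => c *: mul g b) (span_submodule _) _ _ hg).
    exact: linf_scale (mull_lin b).
  by move=> a Aa; apply: span_sub; exists a => //; exists b.
apply: (span_lin (f := fun x => c *: mul g x) (span_submodule _) _ h1 hx).
exact: linf_scale (mulr_lin g).
Qed.

Lemma grouping (S W : set R) : S `<=` W -> [set mul x y | x in S & y in S] `<=` W ->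
  forall m xs y, (m <= size xs <= 2 * m)%N -> (forall x, x \in xs -> S x) ->
  exists gs, [/\ (forall g, g \in gs -> W g), size gs = m &
     foldl mul y xs = foldl mul y gs].
Proof.
move=> SW S2W; elim=> [|m IH] xs y.
  by case: xs => // _ _; exists [::].
case: xs => [|a ys] //= /andP [h1 h2] hS.
have Sa : S a by apply: hS; exact: mem_head.
have hS' x : x \in ys -> S x by move=> xy; apply: hS; rewrite inE xy orbT.
have [le|gt] := leqP (size ys) (2 * m).
  have hh : (m <= size ys <= 2 * m)%N.
    by move: h1 le; set k := size ys => h1 le; apply/andP; split; lia.
  have [gs [gW gsz ge]] := IH ys (mul y a) hh hS'.
  exists (a :: gs); split => //=; last by rewrite gsz.
  by move=> g; rewrite inE => /orP [/eqP ->|/gW]; [exact: SW|].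
clear hS; case: ys h1 h2 hS' gt => [|b zs] //= h1 h2 hS' gt.
have Sb : S b by apply: hS'; exact: mem_head.
have hh : (m <= size zs <= 2 * m)%N.
  by move: h1 h2 gt; set k := size zs => h1 h2 gt; apply/andP; split; lia.
have hS'' x : x \in zs -> S x by move=> xz; apply: hS'; rewrite inE xz orbT.
have [gs [gW gsz ge]] := IH zs (mul (mul y a) b) hh hS''.
exists (mul a b :: gs); split => /=; last 2 first.
- by rewrite gsz.
- by rewrite ge; case: Valg => -> _ _.
by move=> g; rewrite inE => /orP [/eqP ->|/gW] //; apply: S2W; exists a => //; exists b.
Qed.


Lemma ling_char (B : set (set R)) T : is_bornology B -> ling mul pi B T ->
  exists S, B S /\ T `<=` LG S.
Proof.
move=> [bF bU bS] hT; apply: (hT [set T | exists S, B S /\ T `<=` LG S]).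
  split.
  - by move=> F fF; exists F; split; [exact: bF | exact: lg_sub].
  - move=> S1 S2 [T1 [B1 h1]] [T2 [B2 h2]]; exists (T1 `|` T2); split; first exact: bU.
    move=> x [/h1|/h2]; apply: lg_mono => y ?; by [left|right].
  - by move=> S1 S2 S12 [T2 [B2 h2]]; exists T2; split => //; exact: subset_trans h2.
by move=> S BS; exists S; split.
Qed.

Lemma lg_compactoid (B : set (set R)) S : born_alg mul B -> nuclear pi B -> B S ->
  compactoid pi (ling mul pi B) (LG S).
Proof.
move=> [[[bF bU bS] bM] bP] nB BS.
have [T [sT BT ST h]] := nB S BS.
have BW0 : B (S `|` T `|` [set mul x y | x in S & y in S]).
  by apply: (bU); [apply: (bU) | apply: (bP)].
have [W [sW BW W0]] := bM _ BW0.
have SW : S `<=` W by move=> x hx; apply: W0; left; left.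
have TW : T `<=` W by move=> x hx; apply: W0; left; right.
have S2W : [set mul x y | x in S & y in S] `<=` W by move=> x hx; apply: W0; right.
pose U := LG W.
have sU : submodule U := span_submodule _.
exists U; split => //.
- by move=> B' _ hB'; apply: hB'.
- exact: lg_mono SW.
move=> n; have [F [fF FT c]] := h n.
pose G := fix G (k : nat) : set R :=
  if k is k'.+1 then [set pi *: mul a b | a in G k' & b in F] else F.
have GU k : G k `<=` U.
  elim: k => [|k IH] /=; first by move=> x /FT /TW; apply: lg_sub.
  by move=> _ [a ha [b hb <-]]; apply: lg_mulr (IH a ha) (TW _ (FT _ hb)).
have Gfin k : finite_set (G k).
  by elim: k => [|k IH] //=; apply: finite_image2.
have Hfin K : finite_set [set x | exists2 k, (k <= K)%N & G k x].
  elim: K => [|K IH].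
    apply: sub_finite_set (Gfin 0%N) => x [k]; rewrite leqn0 => /eqP -> //.
  apply: (sub_finite_set (B := [set x | exists2 k, (k <= K)%N & G k x] `|` G K.+1)).
    move=> x [k]; rewrite leq_eqVlt ltnS => /orP [/eqP -> |hk] hx; [right|left] => //.
    by exists k.
  by rewrite finite_setU.
pose H := [set x | exists2 k, (k <= 2 * n)%N & G k x].
have HU : H `<=` U by move=> x [k _ /GU].
have claim k x0 xs : S x0 -> (forall x, x \in xs -> S x) -> size xs = k ->
  [set x + y | x in Defs.span (G k) & y in pimul pi n U] (pi ^+ k *: nprod mul x0 xs).
  move=> S0; elim/last_ind: xs k => [|xs s IH] k Sxs sz.
    rewrite -sz expr0 scale1r /nprod /=.
    have [u hu [_ [t ht <-] <-]] := c x0 S0.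
    exists u => //; exists (pi ^+ n *: t) => //; exists t => //.
    exact/lg_sub/TW.
  have Ss : S s by apply: Sxs; rewrite mem_rcons mem_head.
  have Sxs' x : x \in xs -> S x by move=> hx; apply: Sxs; rewrite mem_rcons inE hx orbT.
  have [u hu [_ [t ht <-] e]] := IH (size xs) Sxs' erefl.
  have [x hx [_ [y hy <-] es]] := c s Ss.
  move: sz; rewrite size_rcons => <-.
  exists (pi *: mul u x); first exact: span_mul2.
  exists (pi ^+ n *: (pi *: mul u y + pi *: mul t s)).
    exists (pi *: mul u y + pi *: mul t s) => //.
    case: (sU) => _ D _; apply: D; last exact: lg_mulr ht (SW _ Ss).
    exact: lg_mulr (span_min sU (GU _) hu) (TW _ hy).
  have E1 : mul u s = mul u x + pi ^+ n *: mul u y.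
    by rewrite -es (linfD (mulr_lin u)) (linfZ (mulr_lin u)).
  rewrite /nprod foldl_rcons -/(nprod mul x0 xs) exprS -scalerA.
  rewrite -(linfZ (mull_lin s) (pi ^+ size xs)) -e (linfD (mull_lin s)) (linfZ (mull_lin s)) E1.
  rewrite !scalerDr !scalerA addrA; congr (_ + _ + _); by rewrite mulrC.
have cover : LG S `<=` [set x + y | x in Defs.span H & y in pimul pi n U].
  apply: span_min; first exact: (sub_sum (span_submodule H) (@pimul_sub _ pi _ n _ sU)).
  move=> _ [x0 h0 [xs hxs <-]].
  case: (leqP (size xs) (2 * n)) => hk.
    have [u hu [v hv <-]] := claim _ x0 xs h0 hxs erefl.
    have GH : G (size xs) `<=` H by move=> z hz; exists (size xs).
    by exists u; [exact: (span_mono GH hu) | exists v].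
  have hh : (size xs - n <= size xs <= 2 * (size xs - n))%N.
    by move: hk; set k := size xs => hk; apply/andP; split; lia.
  have [gs [gW gsz ge]] := grouping SW S2W x0 hh hxs.
  exists 0; first by case: (span_submodule H).
  exists (pi ^+ n *: (pi ^+ (size xs - n) *: nprod mul x0 gs)).
    exists (pi ^+ (size xs - n) *: nprod mul x0 gs) => //.
    by apply: span_sub; exists x0; [exact: SW | exists gs => //; rewrite gsz].
  rewrite add0r scalerA -exprD subnKC; last by move: hk; set k := size xs => hk; lia.
  by rewrite /nprod ge.
exists H; split => //; exact: Hfin.
Qed.

Lemma part1 (B : set (set R)) : born_alg mul B -> nuclear pi B ->
  nuclear pi (ling mul pi B).
Proof.
move=> bB nB T hT.
have [S [BS TS]] := ling_char (bB.1.1) hT.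
exact: compactoid_sub TS (lg_compactoid bB nB BS).
Qed.

End Alg.

Unset Implicit Arguments.

Theorem proposition4p9 (V : idomainType) (pi : V) (R : lmodType V)
  (mul : R -> R -> R) (B : set (set R)) :
  is_complete_dvr pi ->
  is_Valgebra mul -> born_alg mul B -> nuclear pi B ->
  nuclear pi (ling mul pi B) /\
  (forall (C : lmodType V) (BC : set (set C)) (j : R -> C),
     is_completion pi (ling mul pi B) BC j -> nuclear pi BC).
Proof.
move=> _ Valg bB nB; split; first exact: (part1 Valg bB nB).
move=> C BC j hc; exact: (part2 (part1 Valg bB nB) hc).
Qed.
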